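(* Let $R$ be a noetherian domain and let $I$ be a nonzero ideal of $R$. \begin{enumerate} \item If $J$ is a nonzero ideal of $R$ with $I \subseteq J$ and $J/I \cong R/P$ as $R$-modules for some prime ideal $P \subseteq R$, then $\omega'(I) \le \omega'(J)+1$. \item $\omega'(I) < \infty$. \item $\sup \mathsf L_{\mathcal I(R)}(I) \le \omega'(I)$. In particular, $\mathcal I(R)$ is a BF-monoid. \end{enumerate}
   Context: For a domain $R$, $\mathcal I(R)$ denotes the commutative semigroup of all nonzero ideals of $R$ under ideal multiplication (identity $R$). For a nonzero ideal $I$ of $R$, $\omega'(I) \in \mathbb N_0\cup\{\infty\}$ is the smallest $N$ with the property: whenever $n \in \mathbb N$ and $J_1,\dots,J_n \in \mathcal I(R)$ satisfy $J_1\cdots J_n \subseteq I$, there is a subset $\Omega \subseteq \{1,\dots,n\}$ with $|\Omega|\le N$ and $\prod_{\lambda\in\Omega}J_\lambda \subseteq I$ (the empty product being $R$). A monoid means a commutative semigroup $H$ with identity which is unit-cancellative: if $a,u\in H$ and $a=au$, then $u$ is invertible. $H^\times$ is the group of units. An atom is a non-unit $u$ such that $u=ab$ implies $a\in H^\times$ or $b\in H^\times$. For $a\in H$, $\mathsf L_H(a)\subseteq\mathbb N_0$ is the set of all $\ell$ such that $a=\varepsilon u_1\cdots u_\ell$ with $\varepsilon\in H^\times$ and atoms $u_1,\dots,u_\ell$. $H$ is a BF-monoid if it is unit-cancellative and $\mathsf L_H(a)$ is finite and nonempty for every $a\in H$. *)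

(* Defs.v *)
From HB Require Import structures.
From mathcomp Require Import all_boot all_order all_algebra.
From mathcomp Require Import boolp classical_sets.
Set Implicit Arguments.
Unset Strict Implicit.
Unset Printing Implicit Defensive.
Import Order.TTheory GRing.Theory Num.Theory.
Local Open Scope ring_scope.
Local Open Scope classical_set_scope.

Section Ideals.
Variable R : idomainType.

Definition is_ideal (I : set R) : Prop :=
  I 0 /\ (forall x y, I x -> I y -> I (x + y)) /\ (forall r x, I x -> I (r * x)).

Definition nonzero_ideal (I : set R) : Prop :=
  is_ideal I /\ exists x, x != 0 /\ I x.

Definition imul (I J : set R) : set R :=
  [set x | exists s : seq (R * R),
      (forall p, p \in s -> I p.1 /\ J p.2) /\ x = \sum_(p <- s) p.1 * p.2].

Definition iprod (s : seq (set R)) : set R := foldr imul setT s.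

Definition noetherian : Prop :=
  forall C : nat -> set R, (forall n, is_ideal (C n)) ->
    (forall n, C n `<=` C n.+1) -> exists m, forall n, (m <= n)%N -> C n = C m.

Definition prime_ideal (P : set R) : Prop :=
  is_ideal P /\ ~ P 1 /\ forall a b, P (a * b) -> P a \/ P b.

(* J/I ~= R/P as R-modules, written out as: there is an R-linear surjection
   f : J -> R/P (f represented by a map R -> R, values read modulo P)
   whose kernel is exactly I. *)
Definition quot_iso (J I P : set R) : Prop :=
  exists f : R -> R,
    (forall x y, J x -> J y -> P (f (x + y) - (f x + f y))) /\
    (forall r x, J x -> P (f (r * x) - r * f x)) /\
    (forall t, exists x, J x /\ P (f x - t)) /\
    (forall x, J x -> (P (f x) <-> I x)).

(* The property defining omega'(I) <= N. *)
Definition omega_bound (I : set R) (N : nat) : Prop :=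
  forall (n : nat) (Js : 'I_n -> set R), (forall i, nonzero_ideal (Js i)) ->
    iprod [seq Js i | i <- enum 'I_n] `<=` I ->
    exists Om : {set 'I_n}, (#|Om| <= N)%N /\ iprod [seq Js i | i <- enum Om] `<=` I.

Lemma omega_bound_ex (I : set R) :
  (exists N, omega_bound I N) -> exists N, `[< omega_bound I N >].
Proof. by move=> [N HN]; exists N; apply/asboolP. Qed.

(* omega'(I) in N_0 \cup {oo}, with None standing for oo. *)
Definition omega' (I : set R) : option nat :=
  match pselect (exists N, omega_bound I N) with
  | left H => Some (ex_minn (omega_bound_ex H))
  | right _ => None
  end.

Definition iunit (U : set R) : Prop :=
  nonzero_ideal U /\ exists V, nonzero_ideal V /\ imul U V = setT.

Definition iatom (U : set R) : Prop :=
  nonzero_ideal U /\ ~ iunit U /\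
  forall A B, nonzero_ideal A -> nonzero_ideal B -> U = imul A B -> iunit A \/ iunit B.

Definition in_lengths (A : set R) (l : nat) : Prop :=
  exists (e : set R) (s : seq (set R)),
    iunit e /\ (forall u, u \in s -> iatom u) /\ size s = l /\ A = imul e (iprod s).

Definition ideal_monoid_BF : Prop :=
  (forall A U, nonzero_ideal A -> nonzero_ideal U -> A = imul A U -> iunit U) /\
  (forall A, nonzero_ideal A ->
     (exists l, in_lengths A l) /\ (exists B, forall l, in_lengths A l -> (l <= B)%N)).

End Ideals.

Definition enat_le (a b : option nat) : Prop :=
  match b, a with
  | None, _ => True
  | Some _, None => False
  | Some m, Some k => (k <= m)%N
  end.

Definition enat_succ (a : option nat) : option nat := omap S a.

(* Main.v *)
Require Import Defs.
From HB Require Import structures.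
From mathcomp Require Import all_boot all_order all_algebra all_fingroup.
From mathcomp Require Import boolp classical_sets.
From mathcomp Require Import ring.
Local Open Scope classical_set_scope.

Section Aux.
Import GRing.Theory.
Local Open Scope ring_scope.
Variable R : idomainType.
Implicit Types A B C D U u I J P : set R.
Implicit Types s t : seq (set R).

Lemma id0 A : is_ideal A -> A 0. Proof. by case. Qed.
Lemma idD A : is_ideal A -> forall x y, A x -> A y -> A (x + y). Proof. by case=> _ []. Qed.
Lemma idM A : is_ideal A -> forall r x, A x -> A (r * x). Proof. by case=> _ []. Qed.
Lemma idMr A : is_ideal A -> forall r x, A x -> A (x * r).
Proof. by move=> hA r x hx; rewrite mulrC; apply: idM. Qed.
Lemma idN A : is_ideal A -> forall x, A x -> A (- x).
Proof. by move=> hA x hx; rewrite -mulN1r; apply: idM. Qed.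
Lemma idB A : is_ideal A -> forall x y, A x -> A y -> A (x - y).
Proof. by move=> hA x y hx hy; apply: idD => //; apply: idN. Qed.
Lemma idsum A (I : Type) (r : seq I) (F : I -> R) :
  is_ideal A -> (forall i, A (F i)) -> A (\sum_(i <- r) F i).
Proof. by move=> hA hF; apply: (big_ind A) => //; [apply: id0| apply: idD]. Qed.

Arguments id0 {A}.
Arguments idD {A}.
Arguments idM {A}.
Arguments idMr {A}.
Arguments idN {A}.
Arguments idB {A}.

Lemma idealT : is_ideal (@setT R). Proof. by []. Qed.

Lemma imul0 A B : imul A B 0.
Proof. by exists [::]; rewrite big_nil. Qed.
Lemma imulD A B x y : imul A B x -> imul A B y -> imul A B (x + y).
Proof.
move=> [s [hs ->]] [t [ht ->]]; exists (s ++ t); rewrite big_cat; split=> //.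
by move=> p; rewrite mem_cat => /orP [/hs|/ht].
Qed.
Lemma imul_in A B a b : A a -> B b -> imul A B (a * b).
Proof.
move=> ha hb; exists [:: (a, b)]; rewrite big_seq1; split=> // p.
by rewrite inE => /eqP ->.
Qed.
Arguments imul_in {A B a b}.
Lemma imul_sub A B C : C 0 -> (forall x y, C x -> C y -> C (x + y)) ->
  (forall a b, A a -> B b -> C (a * b)) -> imul A B `<=` C.
Proof.
move=> h0 hD hab x [s [hs ->]]; elim: s hs => [|p s IH] hs; first by rewrite big_nil.
rewrite big_cons; apply: hD; last by apply: IH => q hq; apply: hs; rewrite inE hq orbT.
by have [] := hs p (mem_head _ _); apply: hab.
Qed.
Lemma imul_ideal A B : is_ideal A -> is_ideal (imul A B).
Proof.
move=> hA; split; first exact: imul0; split; first exact: imulD.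
move=> r x; apply: (imul_sub _ _ [set x | imul A B (r * x)]).
- by rewrite /= mulr0; apply: imul0.
- by move=> y z /= hy hz; rewrite mulrDr; apply: imulD.
- by move=> a b ha hb /=; rewrite mulrA; apply: imul_in => //; apply: idM.
Qed.
Lemma imulC A B : imul A B = imul B A.
Proof.
by apply/seteqP; split; apply: imul_sub; (try exact: imul0); (try exact: imulD);
  move=> a b ha hb; rewrite mulrC; apply: imul_in.
Qed.
Lemma imul_ideal2 A B : is_ideal B -> is_ideal (imul A B).
Proof. by move=> hB; rewrite imulC; apply: imul_ideal. Qed.
Lemma imulA A B C : imul (imul A B) C = imul A (imul B C).
Proof.
apply/seteqP; split.
- apply: imul_sub; [exact: imul0|exact: imulD|] => x c hx hc.
  move: x hx; apply: (imul_sub _ _ [set x | imul A (imul B C) (x * c)]).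
  + by rewrite /= mul0r; apply: imul0.
  + by move=> y z /= hy hz; rewrite mulrDl; apply: imulD.
  + by move=> a b ha hb /=; rewrite -mulrA; apply: imul_in => //; apply: imul_in.
- apply: imul_sub; [exact: imul0|exact: imulD|] => a x ha hx.
  move: x hx; apply: (imul_sub _ _ [set x | imul (imul A B) C (a * x)]).
  + by rewrite /= mulr0; apply: imul0.
  + by move=> y z /= hy hz; rewrite mulrDr; apply: imulD.
  + by move=> b c hb hc /=; rewrite mulrA; apply: imul_in => //; apply: imul_in.
Qed.
Lemma imul_subl A B : is_ideal A -> imul A B `<=` A.
Proof. move=> hA; apply: imul_sub; [exact: id0|exact: idD|] => a b ha _; exact: idMr. Qed.
Lemma imul_subr A B : is_ideal B -> imul A B `<=` B.
Proof. move=> hB; apply: imul_sub; [exact: id0|exact: idD|] => a b _ hb; exact: idM. Qed.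
Lemma imulT A : is_ideal A -> imul A setT = A.
Proof.
move=> hA; apply/seteqP; split; first exact: imul_subl.
by move=> a ha; rewrite -[a]mulr1; apply: imul_in.
Qed.
Lemma imulTl A : is_ideal A -> imul setT A = A.
Proof. by move=> hA; rewrite imulC imulT. Qed.
Lemma imul_mono A A' B B' : A `<=` A' -> B `<=` B' -> imul A B `<=` imul A' B'.
Proof.
move=> hA hB; apply: imul_sub; [exact: imul0|exact: imulD|] => a b ha hb.
by apply: imul_in; [apply: hA|apply: hB].
Qed.
Lemma imul_nz A B : nonzero_ideal A -> nonzero_ideal B -> nonzero_ideal (imul A B).
Proof.
move=> [hA [a [a0 ha]]] [hB [b [b0 hb]]]; split; first exact: imul_ideal.
by exists (a * b); split; [rewrite mulf_neq0|apply: imul_in].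
Qed.
Lemma imul_prime A B P : prime_ideal P -> imul A B `<=` P -> A `<=` P \/ B `<=` P.
Proof.
move=> [hP [hP1 hPab]] hsub.
have [hAP|hAP] := pselect (A `<=` P); first by left.
right; have [a [ha haP]] := nonsubset hAP.
move=> b hb; have := hPab a b (hsub _ (imul_in ha hb)); by case.
Qed.


Lemma iprod_cons u s : iprod (u :: s) = imul u (iprod s). Proof. by []. Qed.

Lemma iprod_ideal s : (forall u, u \in s -> is_ideal u) -> is_ideal (iprod s).
Proof.
elim: s => [|u s IH] hs; first exact: idealT.
rewrite iprod_cons; apply: imul_ideal; exact: hs (mem_head _ _).
Qed.
Lemma iprod_nz s : (forall u, u \in s -> nonzero_ideal u) -> nonzero_ideal (iprod s).
Proof.
elim: s => [|u s IH] hs.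
  by split; [exact: idealT| exists 1; rewrite oner_neq0].
rewrite iprod_cons; apply: imul_nz; first exact: hs (mem_head _ _).
by apply: IH => v hv; apply: hs; rewrite inE hv orbT.
Qed.
Lemma iprod_cat s t : (forall u, u \in t -> is_ideal u) ->
  iprod (s ++ t) = imul (iprod s) (iprod t).
Proof.
move=> ht; elim: s => [|u s IH] /=; first by rewrite imulTl //; apply: iprod_ideal.
by rewrite IH imulA.
Qed.

Section Idx.
Variables (T : eqType) (F : T -> set R).
Lemma iprod_rem x (t : seq T) : x \in t ->
  iprod (map F t) = imul (F x) (iprod (map F (rem x t))).
Proof.
elim: t => [|y t IH] //; rewrite inE /= => xt.
case: eqP => [->|nyx] //=.
have xt' : x \in t by case/orP: xt => // /eqP hxy; case: nyx.
rewrite (IH xt') -!imulA; congr imul; exact: imulC.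
Qed.
Lemma iprod_perm (s t : seq T) : perm_eq s t -> iprod (map F s) = iprod (map F t).
Proof.
elim: s t => [|x s IH] t hst.
  by move: (perm_size hst); case: t hst.
have xt : x \in t by rewrite -(perm_mem hst) mem_head.
rewrite (@iprod_rem x t xt) /= (IH (rem x t)) //.
by rewrite -(perm_cons x); apply: perm_trans hst (perm_to_rem xt).
Qed.
Lemma iprod_prime (t : seq T) P : prime_ideal P -> iprod (map F t) `<=` P ->
  exists x, x \in t /\ F x `<=` P.
Proof.
move=> hP; elim: t => [|y t IH] /=.
  by move=> h; case: hP => _ [h1 _]; exfalso; apply: h1; apply: h.
move=> /(imul_prime _ _ _ hP) [h|/IH [x [hx h]]]; first by exists y; rewrite mem_head.
by exists x; rewrite inE hx orbT.
Qed.
Lemma iprod_sub_elem (t : seq T) x : is_ideal (F x) -> x \in t -> iprod (map F t) `<=` F x.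
Proof. by move=> hx xt; rewrite (@iprod_rem x t xt); apply: imul_subl. Qed.
End Idx.
Arguments iprod_rem {T F x t}.
Arguments iprod_perm {T F s t}.
Arguments iprod_prime {T F t P}.
Arguments iprod_sub_elem {T F t x}.

Lemma enum_U1 n (mu : 'I_n) (Om : {set 'I_n}) : mu \notin Om ->
  perm_eq (enum (mu |: Om)) (mu :: enum Om).
Proof.
move=> hmu; apply: uniq_perm; first exact: enum_uniq.
  by rewrite /= mem_enum hmu enum_uniq.
by move=> x; rewrite mem_enum !inE mem_enum.
Qed.
Lemma enum_split n (Om : {set 'I_n}) :
  perm_eq (enum 'I_n) (enum (~: Om) ++ enum Om).
Proof.
apply: uniq_perm; first exact: enum_uniq.
  rewrite cat_uniq !enum_uniq /= andbT; apply/hasPn => x.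
  by rewrite !mem_enum inE => ->.
by move=> x; rewrite mem_cat !mem_enum !inE; case: (x \in Om).
Qed.


Arguments enum_U1 {n mu Om}.
Arguments enum_split {n}.

Lemma omega_spec1 I N : omega_bound I N -> exists m, omega' I = Some m /\ (m <= N)%N.
Proof.
move=> hN; rewrite /omega'; case: pselect => [H|H]; last by exfalso; apply: H; exists N.
case: ex_minnP => m hm hmin; exists m; split=> //; apply: hmin; exact/asboolP.
Qed.
Lemma omega_spec2 I m : omega' I = Some m -> omega_bound I m.
Proof.
rewrite /omega'; case: pselect => [H|H] // [<-].
by case: ex_minnP => k /asboolP.
Qed.

Lemma part1 I J P N : is_ideal I -> is_ideal J -> I `<=` J -> prime_ideal P ->
  quot_iso J I P -> omega_bound J N -> omega_bound I N.+1.
Proof.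
move=> hI hJ hIJ hP [f [fadd [fmul [fsurj fker]]]] hb n Js hJs hprod.
have hJs' : forall i, is_ideal (Js i) := fun i => (hJs i).1.
have hPi : is_ideal P by case: hP.
have [Om [hOm hK]] := hb n Js hJs (subset_trans hprod hIJ).
set K := iprod [seq Js i | i <- enum Om] in hK *.
have [KI|KI] := pselect (K `<=` I); first by exists Om; split => //; exact: leqW.
have [k [hk hkI]] := nonsubset KI.
have fkP : ~ P (f k) := fun h => hkI ((fker k (hK _ hk)).1 h).
set M := iprod [seq Js i | i <- enum (~: Om)].
have hMK : imul M K `<=` I.
  rewrite /M /K -iprod_cat; last by move=> u /mapP [i _ ->].
  by rewrite -map_cat -(iprod_perm (enum_split Om)).
have MP : M `<=` P.
  move=> m hm; have hmk : I (m * k) := hMK _ (imul_in hm hk).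
  have h1 := fmul m k (hK _ hk).
  have h2 : P (f (m * k)) := (fker _ (hIJ _ hmk)).2 hmk.
  have h3 : P (m * f k).
    by have := idB hPi _ _ h2 h1; rewrite opprB addrC subrK.
  by case: hP => _ [_ hpr]; case: (hpr _ _ h3).
have [mu [hmu hmuP]] := iprod_prime hP MP.
have hmu' : mu \notin Om by move: hmu; rewrite mem_enum inE.
exists (mu |: Om); split; first by rewrite cardsU1 hmu' add1n ltnS.
rewrite (iprod_perm (enum_U1 hmu')) /=.
apply: imul_sub; [exact: id0|exact: idD|] => j k' hj hk'.
have hjk : J (j * k') := idM hJ j _ (hK _ hk').
have h1 := fmul j k' (hK _ hk').
have h2 : P (j * f k') := idMr hPi (f k') _ (hmuP j hj).
apply: (fker _ hjk).1.
by have := idD hPi _ _ h1 h2; rewrite subrK.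
Qed.


Arguments part1 {I J P N}.

Lemma noeth_ind (Q : set R -> Prop) : noetherian R ->
  (forall A, is_ideal A -> (forall B, is_ideal B -> A `<=` B -> A <> B -> Q B) -> Q A) ->
  forall A, is_ideal A -> Q A.
Proof.
move=> hN hstep A hA; have [//|nQ] := pselect (Q A); exfalso.
pose T := {X : set R | is_ideal X /\ ~ Q X}.
have step : forall X : T, {Y : T | sval X `<=` sval Y /\ sval X <> sval Y}.
  move=> [X [hX nX]]; apply: cid.
  have [[B [hB [h1 [h2 h3]]]]|hno] :=
    pselect (exists B, is_ideal B /\ X `<=` B /\ X <> B /\ ~ Q B).
    by exists (exist _ B (conj hB h3)).
  exfalso; apply: nX; apply: hstep => // B hB hXB hne.
  have [//|nQB] := pselect (Q B); exfalso; apply: hno; exists B; by [].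
pose g := fun X => sval (step X).
pose x0 : T := exist _ A (conj hA nQ).
pose C n := sval (iter n g x0).
have [m hm] := hN C (fun n => (svalP (iter n g x0)).1)
  (fun n => (svalP (step (iter n g x0))).1).
by apply: (svalP (step (iter m g x0))).2; symmetry; apply: (hm m.+1).
Qed.

Lemma noeth_max (F : set R -> Prop) : noetherian R -> (forall B, F B -> is_ideal B) ->
  forall A, F A -> exists M, F M /\ forall B, F B -> M `<=` B -> M = B.
Proof.
move=> hN hF.
suff h : forall A, is_ideal A -> F A -> exists M, F M /\ forall B, F B -> M `<=` B -> M = B.
  by move=> A hA; exact: h A (hF A hA) hA.
apply: (noeth_ind (fun A => F A -> exists M, F M /\ forall B, F B -> M `<=` B -> M = B)) => //.
move=> A hAi IH hA.
have [hmax|hnmax] := pselect (forall B, F B -> A `<=` B -> A = B); first by exists A.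
have [B hB] := (existsNP _).2 hnmax.
have [hFB [hAB hne]] : F B /\ A `<=` B /\ A <> B.
  by move: hB => /not_implyP [hFB /not_implyP [hAB hne]].
exact: IH B (hF B hFB) hAB hne hFB.
Qed.


Lemma part2 : noetherian R -> forall A, nonzero_ideal A -> exists N, omega_bound A N.
Proof.
move=> hN A [hA hnz]; move: A hA hnz.
apply: (noeth_ind (fun A => (exists x, x != 0 /\ A x) -> exists N, omega_bound A N)) => //.
move=> A hA IH hnz.
have [A1|A1] := pselect (A 1).
  exists 0%N => n Js _ _; exists finset.set0; rewrite cards0 enum_set0; split=> // y _.
  by rewrite -[y]mulr1; apply: idM.
pose col x := [set r | A (r * x)].
have colI : forall x, is_ideal (col x).
  move=> x; rewrite /col; split; first by rewrite /= mul0r; apply: id0.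
  split; first by move=> r s /= hr hs; rewrite mulrDl; apply: idD.
  by move=> t r /= hr; rewrite -mulrA; apply: idM.
pose F B := exists x, ~ A x /\ B = col x.
have hF : forall B, F B -> is_ideal B by move=> B [x [_ ->]].
have [M [[x [hx ->]] hmax]] := noeth_max F hN hF (col 1) (ex_intro _ 1 (conj A1 erefl)).
pose P := col x.
have hP : prime_ideal P.
  split; first exact: colI.
  split; first by rewrite /P /col /= mul1r.
  move=> a b; rewrite /P /col /= => hab; have [ha|ha] := pselect (A (a * x)); first by left.
  right; have hsub : col x `<=` col (a * x).
    by rewrite /col => r /= hr; rewrite mulrA (mulrC r) -mulrA; apply: idM.
  have e := hmax _ (ex_intro _ (a * x) (conj ha erefl)) hsub.
  have hb : col (a * x) b by rewrite /col /= mulrA (mulrC b).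
  by move: hb; rewrite -e.
pose J := [set y | exists r, A (y - r * x)].
have hJ : is_ideal J.
  split; first by exists 0; rewrite mul0r subr0; apply: id0.
  split.
    move=> y z [r hr] [s hs]; exists (r + s).
    have -> : y + z - (r + s) * x = (y - r * x) + (z - s * x) by ring.
    exact: idD.
  move=> t y [r hr]; exists (t * r).
  have -> : t * y - t * r * x = t * (y - r * x) by ring.
  exact: idM.
have hAJ : A `<=` J by move=> y hy; exists 0; rewrite mul0r subr0.
have hJx : J x by exists 1; rewrite mul1r subrr; apply: id0.
have hneq : A <> J by move=> e; apply: hx; rewrite e.
have [N hNJ] := IH J hJ hAJ hneq (let: ex_intro y hy := hnz in
   ex_intro _ y (conj hy.1 (hAJ _ hy.2))).
pose f y := match pselect (J y) with left H => sval (cid H) | right _ => 0 end.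
have fP : forall y, J y -> A (y - f y * x).
  by move=> y hy; rewrite /f; case: pselect => // H; exact: svalP (cid H).
exists N.+1; apply: (part1 hA hJ hAJ hP _ hNJ).
exists f; split.
  move=> y z hy hz; rewrite /P /col /=.
  have -> : (f (y + z) - (f y + f z)) * x =
    (y - f y * x) + (z - f z * x) - (y + z - f (y + z) * x) by ring.
  exact: (idB hA _ _ (idD hA _ _ (fP _ hy) (fP _ hz)) (fP _ (idD hJ _ _ hy hz))).
split.
  move=> r y hy; rewrite /P /col /=.
  have -> : (f (r * y) - r * f y) * x =
    r * (y - f y * x) - (r * y - f (r * y) * x) by ring.
  exact: (idB hA _ _ (idM hA _ _ (fP _ hy)) (fP _ (idM hJ _ _ hy))).
split.
  move=> t; have ht : J (t * x) by exists t; rewrite subrr; apply: id0.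
  exists (t * x); split=> //; rewrite /P /col /=.
  have -> : (f (t * x) - t) * x = - (t * x - f (t * x) * x) by ring.
  exact: (idN hA _ (fP _ ht)).
move=> y hy; rewrite /P /col /=; split=> h.
  have -> : y = (y - f y * x) + f y * x by ring.
  exact: (idD hA _ _ (fP _ hy) h).
have -> : f y * x = y - (y - f y * x) by ring.
exact: (idB hA _ _ h (fP _ hy)).
Qed.


Lemma delta_sum k (F : 'I_k -> R) (j : 'I_k) : \sum_(i < k) (j == i)%:R * F i = F j.
Proof.
rewrite (bigD1 j) //= eqxx mul1r big1 ?addr0 // => i hi.
by rewrite eq_sym (negbTE hi) mul0r.
Qed.

Lemma detU k (X : 'M[R]_k) U : is_ideal U -> (forall i j, U (X i j)) ->
  U (\det (1%:M - X) - 1).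
Proof.
move=> hU hX; rewrite /determinant (bigD1 1%g) //=.
rewrite odd_perm1 expr0 mul1r addrAC.
apply: (idD hU).
  apply: (big_ind (fun x => U (x - 1))).
  - by rewrite subrr; apply: id0.
  - move=> x y hx hy.
    have -> : x * y - 1 = x * (y - 1) + (x - 1) by ring.
    by apply: (idD hU); [apply: (idM hU)|].
  - move=> i _; rewrite perm1 !mxE eqxx /=.
    have -> : 1%:R - X i i - 1 = - X i i by ring.
    exact: (idN hU).
apply: (big_ind U); [exact: id0 hU|exact: idD hU|] => s hs.
apply: (idM hU).
have [i hi] : exists i, s i != i.
  apply: contrapT => hne; move: hs; suff -> : s = 1%g by rewrite eqxx.
  apply/permP => i; rewrite perm1; apply/eqP; apply: contrapT => h; apply: hne; by exists i; apply/negP.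
rewrite (bigD1 i) //= mxE; apply: (idMr hU).
rewrite mxE eq_sym (negbTE hi) /= add0r mxE; exact: (idN hU).
Qed.


Definition gen (s : seq R) : set R :=
  [set y | exists c : 'I_(size s) -> R, y = \sum_(j < size s) c j * s`_j].

Lemma gen_ideal (s : seq R) : is_ideal (gen s).
Proof.
split; first by exists (fun _ => 0); rewrite big1 // => j _; rewrite mul0r.
split.
  move=> x y [c ->] [d ->]; exists (fun j => c j + d j); rewrite -big_split /=.
  by apply: eq_bigr => j _; rewrite mulrDl.
move=> r x [c ->]; exists (fun j => r * c j); rewrite mulr_sumr.
by apply: eq_bigr => j _; rewrite mulrA.
Qed.
Lemma gen_mem (s : seq R) (j : 'I_(size s)) : gen s (s`_j).
Proof. by exists (fun i => (j == i)%:R); rewrite delta_sum. Qed.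
Lemma gen_sub (s : seq R) A : is_ideal A -> (forall j : 'I_(size s), A s`_j) -> gen s `<=` A.
Proof.
move=> hA hs y [c ->]; apply: (idsum _ _ _ _ hA) => j; exact: (idM hA).
Qed.
Lemma gen_cons x (s : seq R) : gen s `<=` gen (x :: s) /\ gen (x :: s) x.
Proof.
split; last exact: (gen_mem (x :: s) ord0).
apply: gen_sub; first exact: gen_ideal.
move=> j; have := gen_mem (x :: s) (lift ord0 j); by rewrite lift0.
Qed.

Lemma fg : noetherian R -> forall A, is_ideal A -> exists s : seq R, A = gen s.
Proof.
move=> hN A hA.
pose F B := exists s : seq R, B = gen s /\ B `<=` A.
have hF : forall B, F B -> is_ideal B by move=> B [s [-> _]]; exact: gen_ideal.
have F0 : F (gen [::]).
  exists [::]; split=> //; apply: gen_sub => // [[j hj]] //.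
have [M [[s [-> hsA]] hmax]] := noeth_max F hN hF _ F0.
exists s; apply/seteqP; split=> // x hx.
have [//|hxs] := pselect (gen s x); exfalso.
have [h1 h2] := gen_cons x s.
have hFx : F (gen (x :: s)).
  exists (x :: s); split=> //; apply: gen_sub => // j.
  case: j => [[|j] hj] //=; exact: (hsA _ (gen_mem s (Ordinal (hj : j < size s)%N))).
have e := hmax (gen (x :: s)) hFx h1.
by apply: hxs; rewrite e.
Qed.


Lemma iunit_T U : iunit U -> U = setT.
Proof.
move=> [[hU _] [V [_ e]]]; apply/seteqP; split=> // y _.
by apply: (imul_subl _ V hU); rewrite e.
Qed.
Arguments iunit_T {U}.
Lemma iunitT : iunit (@setT R).
Proof.
have hT : nonzero_ideal (@setT R) by split; [exact: idealT|exists 1; rewrite oner_neq0].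
split=> //; exists setT; split=> //; exact: imulT.
Qed.

Lemma icancel A U : noetherian R -> nonzero_ideal A -> nonzero_ideal U ->
  A = imul A U -> iunit U.
Proof.
move=> hN [hA [a [a0 ha]]] hU e.
suff U1 : U 1.
  have -> : U = setT by apply/seteqP; split=> // y _; rewrite -[y]mulr1; exact: (idM hU.1).
  exact: iunitT.
have hUi := hU.1.
have [s hs] := fg hN _ hA.
pose k := size s.
pose W := [set y | exists u : 'I_k -> R, (forall j, U (u j)) /\ y = \sum_(j < k) u j * s`_j].
have sub : imul U (gen s) `<=` W.
  apply: imul_sub.
  - exists (fun _ => 0); split; first by move=> _; exact: id0.
    by rewrite big1 // => j _; rewrite mul0r.
  - move=> x y [u [hu ->]] [w [hw ->]]; exists (fun j => u j + w j); split.
      by move=> j; exact: idD.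
    by rewrite -big_split /=; apply: eq_bigr => j _; rewrite mulrDl.
  - move=> b m hb [c ->]; exists (fun j => b * c j); split.
      by move=> j; exact: (idMr hUi).
    by rewrite mulr_sumr; apply: eq_bigr => j _; rewrite mulrA.
have hrep : forall i : 'I_k, exists u : 'I_k -> R,
    (forall j, U (u j)) /\ s`_i = \sum_(j < k) u j * s`_j.
  move=> i; apply: sub; rewrite -hs imulC -e hs; exact: gen_mem.
pose u i := sval (cid (hrep i)).
pose X : 'M[R]_k := \matrix_(i, j) u i j.
have hXU : forall i j, U (X i j) by move=> i j; rewrite mxE; exact: (svalP (cid (hrep i))).1.
have hXs : forall i : 'I_k, s`_i = \sum_(j < k) X i j * s`_j.
  move=> i; rewrite (svalP (cid (hrep i))).2; apply: eq_bigr => j _; by rewrite mxE.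
pose v : 'cV[R]_k := \col_i s`_i.
have hv : (1%:M - X) *m v = 0.
  apply/matrixP => i j; rewrite !mxE.
  under eq_bigr => l _ do rewrite !mxE.
  have hui : s`_i = \sum_(l < k) u i l * s`_l := (svalP (cid (hrep i))).2.
  rewrite (eq_bigr (fun l => (i == l)%:R * s`_l - u i l * s`_l)); last first.
    by move=> l _; rewrite mulrBl.
  by rewrite big_split /= sumrN delta_sum -hui subrr.
have hd : \det (1%:M - X) *: v = 0 by rewrite -mul_scalar_mx -mul_adj_mx -mulmxA hv mulmx0.
have [i hi] : exists i : 'I_k, s`_i != 0.
  apply: contrapT => hno; apply: (negP a0); apply/eqP.
  move: ha; rewrite hs => -[c ->]; apply: big1 => j _.
  have : s`_j = 0 by apply/eqP; apply: contrapT => h; apply: hno; exists j; apply/negP.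
  by move=> ->; rewrite mulr0.
have := congr1 (fun M : 'cV[R]_k => M i ord0) hd; rewrite !mxE => /eqP.
rewrite mulf_eq0 (negbTE hi) orbF => /eqP hdet.
have := @detU k X U hUi hXU; rewrite hdet sub0r => /(idN hUi _); by rewrite opprK.
Qed.


Arguments icancel {A U}.

Lemma factor : noetherian R -> forall A, nonzero_ideal A ->
  exists s, (forall u, u \in s -> iatom u) /\ A = iprod s.
Proof.
move=> hN A [hA hnz]; move: A hA hnz.
apply: (noeth_ind (fun A => (exists x, x != 0 /\ A x) ->
  exists s, (forall u, u \in s -> iatom u) /\ A = iprod s)) => //.
move=> A hA IH hnz.
have hAnz : nonzero_ideal A by [].
have [hu|hnu] := pselect (iunit A); first by exists [::]; split=> //; exact: iunit_T.
have [ha|hna] := pselect (iatom A).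
  by exists [:: A]; split; [move=> u; rewrite inE => /eqP ->|rewrite /= imulT].
have [B [C [hB [hC [eA [nB nC]]]]]] : exists B C, nonzero_ideal B /\ nonzero_ideal C /\
    A = imul B C /\ ~ iunit B /\ ~ iunit C.
  apply: contrapT => hno; apply: hna; split=> //; split=> // B C hB hC eA.
  have [//|nB] := pselect (iunit B); first by left.
  have [//|nC] := pselect (iunit C); first by right.
  by exfalso; apply: hno; exists B, C.
have hAB : A `<=` B by rewrite eA; exact: (imul_subl _ _ hB.1).
have hAC : A `<=` C by rewrite eA; exact: (imul_subr _ _ hC.1).
have nAB : A <> B.
  move=> e; apply: nC; apply: (icancel hN hB hC); by rewrite -{1}e.
have nAC : A <> C.
  move=> e; apply: nB; apply: (icancel hN hC hB); by rewrite imulC -{1}e.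
have [s1 [h1 e1]] := IH B hB.1 hAB nAB hB.2.
have [s2 [h2 e2]] := IH C hC.1 hAC nAC hC.2.
exists (s1 ++ s2); split.
  by move=> u; rewrite mem_cat => /orP [/h1|/h2].
rewrite iprod_cat -?e1 -?e2 //.
by move=> u /h2 [[hu _] _].
Qed.

Lemma lengths_bound I l N : noetherian R -> nonzero_ideal I -> omega_bound I N ->
  in_lengths I l -> (l <= N)%N.
Proof.
move=> hN hI hb [e [s [he [hs [<- eI]]]]].
have hsi : forall u, u \in s -> is_ideal u by move=> u /hs [[]].
rewrite (iunit_T he) imulTl in eI; last exact: iprod_ideal.
pose n := size s; pose t := in_tuple s.
pose Js := fun i : 'I_n => tnth t i.
have hJs : forall i, nonzero_ideal (Js i) by move=> i; case: (hs _ (mem_tnth i t)).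
have hJs' : forall i, is_ideal (Js i) by move=> i; case: (hJs i).
have hall : [seq Js i | i <- enum 'I_n] = s by rewrite map_tnth_enum.
have hpr : iprod [seq Js i | i <- enum 'I_n] `<=` I by rewrite hall eI.
have [Om [hOm hK]] := hb n Js hJs hpr.
set K := iprod [seq Js i | i <- enum Om] in hK.
suff hT : forall mu, mu \in Om.
  change (n <= N)%N; rewrite -{1}(card_ord n) -cardsT; apply: leq_trans hOm; apply: subset_leq_card.
  by apply/fintype.subsetP => x _; exact: hT.
move=> mu; apply: contrapT => /negP hmu.
set M := iprod [seq Js i | i <- enum (~: Om)].
have hMK : I = imul M K.
  rewrite eI -hall /M /K -iprod_cat; last by move=> u /mapP [i _ ->].
  by rewrite -map_cat -(iprod_perm (enum_split Om)).
have hKi : is_ideal K by apply: iprod_ideal => u /mapP [i _ ->].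
have hIK : I = K.
  apply/seteqP; split=> //; rewrite hMK; exact: imul_subr.
have hMnz : nonzero_ideal M by apply: iprod_nz => u /mapP [i _ ->].
have hu : iunit M.
  apply: (icancel hN hI hMnz); by rewrite imulC {1}hMK hIK.
have hmuM : mu \in enum (~: Om) by rewrite mem_enum inE.
have hMJ : M `<=` Js mu := iprod_sub_elem (hJs' mu) hmuM.
have hJT : Js mu = setT.
  by apply/seteqP; split=> // y _; apply: hMJ; rewrite (iunit_T hu).
case: (hs _ (mem_tnth mu t)) => _ [hnu _]; apply: hnu.
by rewrite -/(Js mu) hJT; exact: iunitT.
Qed.

End Aux.

Theorem proposition2p2 (R : idomainType) (hR : noetherian R)
    (I : set R) (hI : nonzero_ideal I) :
  (forall J P : set R, nonzero_ideal J -> I `<=` J -> prime_ideal P ->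
     quot_iso J I P -> enat_le (omega' I) (enat_succ (omega' J))) /\
  omega' I <> None /\
  ((forall l, in_lengths I l -> enat_le (Some l) (omega' I)) /\
   ideal_monoid_BF R).
Proof.
have [N hN] := part2 _ hR _ hI.
have [m [em hm]] := omega_spec1 _ _ _ hN.
have hbm := omega_spec2 _ _ _ em.
split.
  move=> J P hJ hIJ hP hq; case eJ: (omega' J) => [k|] //=.
  have hb := @part1 R I J P k hI.1 hJ.1 hIJ hP hq (omega_spec2 _ _ _ eJ).
  by have [m' [-> hm']] := omega_spec1 _ _ _ hb.
split; first by rewrite em.
split.
  by move=> l hl; rewrite em /=; exact: (lengths_bound _ _ _ _ hR hI hbm hl).
split.
  by move=> A U hA hU e; exact: (@icancel R A U hR hA hU e).
move=> A hA; split.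
  have [s [hs e]] := factor _ hR _ hA.
  exists (size s), setT, s; split; first exact: (iunitT R).
  split=> //; split=> //; rewrite imulTl -?e //.
  by case: hA.
have [NA hNA] := part2 _ hR _ hA.
have [mA [emA _]] := omega_spec1 _ _ _ hNA.
exists mA => l hl; exact: (lengths_bound _ _ _ _ hR hA (omega_spec2 _ _ _ emA) hl).
Qed.
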